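(* Let $\ell\ge 3$ and let $\mathbf{C}$ be a real $\ell\times\ell$ matrix of the following form. Its first row is $(\alpha,\beta',0,\ldots,0,\beta')$ and its first column is $(\alpha,\beta,0,\ldots,0,\beta)^T$. The trailing $(\ell-1)\times(\ell-1)$ block $\mathbf{S}$ (rows and columns $2,\ldots,\ell$ of $\mathbf{C}$, indexed $1,\ldots,\ell-1$) is tridiagonal with - $\mathbf{S}_{k,k}=\alpha_k$ for $1\le k\le \ell-1$, where $\alpha_k=\alpha_{\ell-k}$; - $\mathbf{S}_{k,k+1}=\beta_k$ and $\mathbf{S}_{k+1,k}=\beta_{\ell-1-k}$ for $1\le k\le \ell-2$. Here $\alpha,\beta,\beta',\alpha_k,\beta_k$ are real numbers, so the superdiagonal of $\mathbf{S}$ reads $\beta_1,\ldots,\beta_{\ell-2}$ and the subdiagonal reads $\beta_{\ell-2},\ldots,\beta_1$. Suppose $\beta_k\beta_{\ell-k-1}>0$ for all $1\le k\le \ell-2$ and $\beta\beta'>0$. Then all eigenvalues of $\mathbf{C}$ are real. *)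

(* Defs.v *)
From HB Require Import structures.
From mathcomp Require Import all_boot all_order all_algebra.
From mathcomp Require Import complex.
Set Implicit Arguments. Unset Strict Implicit. Unset Printing Implicit Defensive.
Import Order.TTheory GRing.Theory Num.Theory.
Local Open Scope ring_scope.

(* The l x l matrix C of the paper, with 0-based indices 0..l-1.
   Row/column 0 is the paper's row/column 1; index k >= 1 is the paper's
   row/column k+1, i.e. index k of the trailing block S.
   a k = alpha_k, b k = beta_k (only values for 1 <= k <= l-1 resp. l-2 matter). *)
Definition Cmat (R : pzRingType) (l : nat) (alpha beta beta' : R) (a b : nat -> R)
  : 'M[R]_l :=
  \matrix_(i < l, j < l)
    let i := (i : nat) in let j := (j : nat) in
    if (i == 0) && (j == 0) then alpha
    else if i == 0 then (if (j == 1) || (j == l.-1) then beta' else 0)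
    else if j == 0 then (if (i == 1) || (i == l.-1) then beta else 0)
    else if i == j then a i
    else if j == i.+1 then b i
    else if i == j.+1 then b (l.-1 - j)%N
    else 0.

(* The complexified matrix, so that its (possibly non-real) eigenvalues make sense. *)
Definition Cmat_C (R : rcfType) (l : nat) (alpha beta beta' : R) (a b : nat -> R)
  : 'M[R[i]]_l :=
  map_mx (fun x : R => (x%:C)%C) (Cmat l alpha beta beta' a b).

(* Main.v *)
Require Import Defs.
From HB Require Import structures.
From mathcomp Require Import all_boot all_order all_algebra.
From mathcomp Require Import complex.
From mathcomp Require Import ring.
Import Order.TTheory GRing.Theory Num.Theory.
Local Open Scope ring_scope.

Lemma abstract_real (R : rcfType) (n : nat) (C : 'M[R]_n) (m : 'I_n -> R) :
  (forall j, 0 < m j) -> (forall i j, C i j * m j = C j i * m i) ->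
  forall z : R[i], eigenvalue (map_mx (fun x : R => (x%:C)%C) C) z ->
    complex.Im z = 0.
Proof.
move=> hm hsym z /eigenvalueP [v hv vn0].
pose B i j := ((C i j * m j)%:C)%C : R[i].
have hB i j : B i j = B j i by rewrite /B hsym.
pose S := \sum_j \sum_i v 0 i * B i j * conjc (v 0 j).
pose N := \sum_j ((m j)%:C)%C * (v 0 j * conjc (v 0 j)).
have hS : S = z * N.
  rewrite /S /N mulr_sumr; apply: eq_bigr => j _.
  have := congr1 (fun M : 'rV_n => M 0 j) hv; rewrite !mxE => e.
  rewrite /B.
  under eq_bigr => i _ do rewrite rmorphM /= mulrA.
  rewrite -mulr_suml.
  rewrite -mulr_suml.

  move: e; under eq_bigr => i _ do rewrite mxE; move=> ->; ring.
have hSc : conjc S = S.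
  rewrite /S rmorph_sum /=.
  under eq_bigr => j _ do rewrite rmorph_sum /=.
  under eq_bigr => j _ do under eq_bigr => i _ do rewrite !rmorphM /= conjcK /B /= oppr0 complexr0.
  rewrite exchange_big /=; apply: eq_bigr => j _; apply: eq_bigr => i _.
  rewrite hsym; ring.
have hNc : conjc N = N.
  rewrite /N rmorph_sum /=; apply: eq_bigr => j _.
  by rewrite !rmorphM /= conjcK oppr0 complexr0 (mulrC (conjc _)).
have hN : N != 0.
  apply: contraNneq vn0 => /eqP.
  rewrite psumr_eq0; last first.
    move=> j _; apply: mulr_ge0; first by rewrite ler0c ltW.
    exact: mulcJ_ge0.
  move=> /allP H; apply/eqP/rowP => j; rewrite mxE.
  have := H j (mem_index_enum j).
  rewrite mulf_eq0 => /orP [].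
    by move/eqP=> [] /eqP; rewrite (gt_eqF (hm j)).
  by rewrite mulf_eq0 conjc_eq0 orbb => /eqP.
have hz : z = conjc z.
  apply/eqP; rewrite -subr_eq0; apply/eqP.
  apply: (mulIf hN); rewrite mul0r mulrBl -hS.
  by rewrite -hNc -rmorphM /= -hS hSc subrr.
move: hz; clear; case: z => a b /= [] /eqP.
by rewrite -subr_eq0 opprK -mulr2n mulrn_eq0 /= => /eqP.
Qed.

Lemma div_gt0_of_mul (R : realFieldType) (x y : R) : 0 < x * y -> 0 < x / y.
Proof.
move=> hxy.
have hy : y != 0 by apply: contraTneq hxy => ->; rewrite mulr0 ltxx.
have hyy : 0 < y * y by rewrite lt_def mulf_neq0 // -expr2 sqr_ge0.
have -> : x / y = (x * y) / (y * y) by field.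
exact: divr_gt0.
Qed.

From mathcomp Require Import zify.

Section Conc.
Variables (R : rcfType) (l : nat) (alpha beta beta' : R) (a b : nat -> R).
Hypothesis hl : (3 <= l)%N.
Hypothesis hb : forall k : nat, (1 <= k <= l - 2)%N -> 0 < b k * b (l - k - 1)%N.
Hypothesis hbb : 0 < beta * beta'.

Definition f (j : nat) : R := \prod_(1 <= i < j) (b (l - i - 1)%N / b i).
Definition w (j : nat) : R := if j == 0%N then 1 else beta / beta' * f j.

Lemma bne0 k : (1 <= k <= l - 2)%N -> b k != 0.
Proof. by move=> /hb; apply: contraTneq => ->; rewrite mul0r ltxx. Qed.

Lemma beta'ne0 : beta' != 0.
Proof. by apply: contraTneq hbb => ->; rewrite mulr0 ltxx. Qed.

Lemma f_gt0 j : (j <= l.-1)%N -> 0 < f j.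
Proof.
move=> hj; rewrite /f big_nat_cond; apply: prodr_gt0 => i /andP [/andP [h1 h2] _].
apply: div_gt0_of_mul; rewrite mulrC; apply: hb; lia.
Qed.

Lemma w_gt0 j : (j <= l.-1)%N -> 0 < w j.
Proof.
move=> hj; rewrite /w; case: eqP => // _.
by apply: mulr_gt0; [apply: div_gt0_of_mul | apply: f_gt0].
Qed.

Lemma w1 : w 1 = beta / beta'.
Proof. by rewrite /w /= /f big_geq // mulr1. Qed.

Lemma wS j : (1 <= j <= l - 2)%N -> b j * w j.+1 = b (l.-1 - j)%N * w j.
Proof.
move=> hj; rewrite /w /= (_ : (j == 0%N) = false); last by lia.
rewrite /f big_nat_recr /=; last by lia.
have -> : (l.-1 - j = l - j - 1)%N by lia.
have := bne0 _ hj => hbj.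
by field; rewrite hbj beta'ne0.
Qed.

Lemma wlast : w l.-1 = beta / beta'.
Proof.
rewrite /w (_ : (l.-1 == 0%N) = false); last by lia.
suff -> : f l.-1 = 1 by rewrite mulr1.
rewrite /f prodf_div big_nat_rev /=.
rewrite [X in X / _](eq_big_nat _ _ (F2 := b)); last first.
  move=> i hi; congr b; lia.
apply: divff; rewrite big_nat_cond prodf_seq_neq0; apply/allP => i _.
apply/implyP => /andP [hi _]; apply: bne0; lia.
Qed.

Lemma Csym (i j : 'I_l) :
  Cmat l alpha beta beta' a b i j * w j = Cmat l alpha beta beta' a b j i * w i.
Proof.
wlog hij : i j / (i <= j)%N.
  move=> H; case: (leqP i j) => hij; first exact: H.
  by symmetry; apply: H; rewrite ltnW.
rewrite !mxE /=.
case: i j hij => [i hi] [j hj] /= hij.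
case: (eqVneq i j) => [-> //|nij].
have {nij hij} hij : (i < j)%N by lia.
case: i hi hij => [|i] hi hij.
  case: j hj hij => [|j] hj hij //=.
  case: (eqVneq j 0%N) => [-> /=|j0].
    by rewrite w1 /w /=; field; rewrite beta'ne0.
  case: (eqVneq j.+1 l.-1) => [e|jl].
    rewrite orbT e wlast.
    by rewrite /w /=; field; rewrite beta'ne0.
  rewrite /= (_ : (j.+1 == 1)%N = false) ?(negbTE jl) //=; last by lia.
  by rewrite !mul0r.
case: j hj hij => [|j] hj hij //=.
rewrite (_ : (i.+1 == j.+2)%N = false) /=; last by lia.
case: (eqVneq j (i.+1)) => [-> /=|ji].
  by rewrite eqxx wS //; lia.
by rewrite (_ : (j.+1 == i.+2)%N = false) ?mul0r //; lia.
Qed.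

End Conc.

Theorem lemmaA2 (R : rcfType) (l : nat) (alpha beta beta' : R) (a b : nat -> R) :
  (3 <= l)%N ->
  (forall k : nat, (1 <= k <= l.-1)%N -> a k = a (l - k)%N) ->
  (forall k : nat, (1 <= k <= l - 2)%N -> 0 < b k * b (l - k - 1)%N) ->
  0 < beta * beta' ->
  forall z : R[i], eigenvalue (Cmat_C l alpha beta beta' a b) z ->
    complex.Im z = 0.
Proof.
move=> hl _ hb hbb z hz.
have hm : forall j : 'I_l, 0 < @w R l beta beta' b j.
  move=> j; apply: w_gt0 => //; have := ltn_ord j; lia.
have hs : forall i j : 'I_l, Cmat l alpha beta beta' a b i j * @w R l beta beta' b j
   = Cmat l alpha beta beta' a b j i * @w R l beta beta' b i.
  by move=> i j; apply: Csym.
exact: (@abstract_real R l _ _ hm hs z hz).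
Qed.
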